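(* Let $p\ge1$ and let $x_0,x_1,\dots,x_p,y_1,\dots,y_p\in\mathbb{C}$ be pairwise distinct and all different from $1$. For $n,k\in\{0,1,\dots,p\}$ define $$B_{n,k}=\prod_{i=1}^{p}\frac{1-x_i}{1-y_i}+\sum_{j=1}^{p}\frac{(1-x_n)(1-x_k)(x_0-y_j)(y_j-x_j)}{(1-y_j)(1-x_0)(y_j-x_n)(y_j-x_k)}\prod_{\substack{i=1\\ i\ne j}}^{p}\frac{x_i-y_j}{y_i-y_j}.$$ Then $$B_{n,k}=\delta_{n,k}\,\frac{(x_k-1)\prod_{i=0,\,i\ne k}^{p}(x_k-x_i)}{(x_0-1)\prod_{i=1}^{p}(x_k-y_i)},$$ where $\delta_{n,k}$ is the Kronecker delta. *)

(* Defs.v *)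
From mathcomp Require Import all_boot all_order all_algebra.
From mathcomp Require Export complex.
From mathcomp Require Import reals.
Set Implicit Arguments. Unset Strict Implicit. Unset Printing Implicit Defensive.
Import Order.TTheory GRing.Theory Num.Theory.
Local Open Scope ring_scope.

(* x, y : nat -> R[i]; the relevant values are x 0 .. x p and y 1 .. y p. *)

Definition Bnk (R : realType) (p : nat) (x y : nat -> R[i]) (n k : nat) : R[i] :=
  \prod_(1 <= i < p.+1) ((1 - x i) / (1 - y i))
  + \sum_(1 <= j < p.+1)
      ((1 - x n) * (1 - x k) * (x 0%N - y j) * (y j - x j)
        / ((1 - y j) * (1 - x 0%N) * (y j - x n) * (y j - x k))
       * \prod_(1 <= i < p.+1 | i != j) ((x i - y j) / (y i - y j))).

(* Main.v *)
Require Import Defs.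
From mathcomp Require Import all_boot all_order all_algebra.
From mathcomp Require Import complex reals ring.
Import Order.TTheory GRing.Theory Num.Theory.
Local Open Scope ring_scope.


Lemma res_sum (F : fieldType) (s : seq F) (q : {poly F}) :
  uniq s -> (size q < size s)%N ->
  \sum_(a <- s) q.[a] / \prod_(b <- s | b != a) (a - b) = 0.
Proof.
move=> us sq.
pose P a := \prod_(b <- s | b != a) ('X - b%:P).
pose L := \sum_(a <- s) (q.[a] / \prod_(b <- s | b != a) (a - b)) *: P a.
have sP a : a \in s -> size (P a) = size s.
  move=> as_; rewrite /P -big_filter size_prod_XsubC -rem_filter // size_rem //.
  by rewrite prednK // (leq_ltn_trans (leq0n _) sq).
have HL c : c \in s -> L.[c] = q.[c].
  move=> cs; rewrite /L horner_sum (bigD1_seq c) //= [X in _ + X]big1_seq ?addr0.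
    rewrite hornerZ /P horner_prod.
    have -> : \prod_(i <- s | i != c) ('X - i%:P).[c] = \prod_(b <- s | b != c) (c - b) by apply: eq_bigr => b _; rewrite hornerXsubC.
    rewrite divfK //; rewrite prodf_seq_neq0; apply/allP => b _; apply/implyP => bc.
    by rewrite subr_eq0 eq_sym.
  move=> a /andP[ac as_]; rewrite hornerZ /P horner_prod.
  have -> : \prod_(i <- s | i != a) ('X - i%:P).[c] = 0; last by rewrite mulr0.
  apply/eqP; rewrite prodf_seq_eq0; apply/hasP; exists c => //.
  by rewrite hornerXsubC subrr eqxx andbT eq_sym.
have sL : (size L <= size s)%N.
  apply: leq_trans (size_sum _ _ _) _.
  apply/bigmax_leqP_seq => a as_ _.
  by apply: leq_trans (size_scale_leq _ _) _; rewrite sP.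
have qL : q - L = 0.
  apply: (roots_geq_poly_eq0 (rs := s)) => //.
    by apply/allP => c cs; rewrite /root hornerD hornerN HL // subrr.
  by apply: leq_trans (size_polyD _ _) _; rewrite size_polyN geq_max sL ltnW.
have : (q - L)`_(size s).-1 = 0 by rewrite qL coef0.
rewrite coefB nth_default; last by rewrite -ltnS prednK // (leq_ltn_trans (leq0n _) sq).
rewrite /L coef_sum sub0r => /eqP; rewrite oppr_eq0 => /eqP H; apply: etrans H.
rewrite !big_seq; apply: eq_bigr => a as_.
rewrite coefZ -(sP a as_).
have := lead_coef_prod_XsubC s (fun b => b != a) id.
by rewrite /lead_coef /P => ->; rewrite mulr1.
Qed.

Theorem lemma4 (R : realType) (p : nat) (x y : nat -> R[i])
  (hp : (1 <= p)%N)
  (hx1 : forall i, (i <= p)%N -> x i != 1)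
  (hy1 : forall i, (1 <= i <= p)%N -> y i != 1)
  (hxx : forall i j, (i <= p)%N -> (j <= p)%N -> i <> j -> x i != x j)
  (hyy : forall i j, (1 <= i <= p)%N -> (1 <= j <= p)%N -> i <> j -> y i != y j)
  (hxy : forall i j, (i <= p)%N -> (1 <= j <= p)%N -> x i != y j)
  (n k : nat) (hn : (n <= p)%N) (hk : (k <= p)%N) :
  Bnk p x y n k =
    (n == k)%:R * ((x k - 1) * \prod_(0 <= i < p.+1 | i != k) (x k - x i)
                   / ((x 0%N - 1) * \prod_(1 <= i < p.+1) (x k - y i))).
Proof.
have h0 : (0 <= p)%N by [].
have nx1 i : (i <= p)%N -> 1 - x i != 0 by move=> hi; rewrite subr_eq0 eq_sym hx1.
have ny1 i : (1 <= i <= p)%N -> 1 - y i != 0 by move=> hi; rewrite subr_eq0 eq_sym hy1.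
have nyx i j : (i <= p)%N -> (1 <= j <= p)%N -> y j - x i != 0.
  by move=> hi hj; rewrite subr_eq0 eq_sym hxy.
have nxy i j : (i <= p)%N -> (1 <= j <= p)%N -> x i - y j != 0.
  by move=> hi hj; rewrite subr_eq0 hxy.
pose D j := \prod_(1 <= i < p.+1 | i != j) (y j - y i).
pose Pj j := \prod_(1 <= i < p.+1 | i != j) (y j - x i).
pose Q a := \prod_(0 <= i < p.+1) (a - x i).
pose Y1 := \prod_(1 <= i < p.+1) (1 - y i).
have nD j : (1 <= j <= p)%N -> D j != 0.
  move=> hj; rewrite prodf_seq_neq0; apply/allP => i; rewrite mem_index_iota => hi.
  apply/implyP => ij; rewrite subr_eq0 eq_sym; apply: hyy => //; exact/eqP.
have nY1 : Y1 != 0.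
  rewrite prodf_seq_neq0; apply/allP => i; rewrite mem_index_iota => hi.
  exact: ny1.
have QE a j : (1 <= j <= p)%N -> Q a = (a - x 0%N) * ((a - x j) * \prod_(1 <= i < p.+1 | i != j) (a - x i)).
  move=> hj; rewrite /Q big_ltn // (bigD1_seq j) ?iota_uniq ?mem_index_iota //.
pose K := (1 - x n) * (1 - x k) / (1 - x 0%N).
pose T1 := Q 1 / ((1 - x n) * (1 - x k) * Y1).
pose T j := Q (y j) / ((y j - 1) * (y j - x n) * (y j - x k) * D j).
have hB : Bnk p x y n k = K * (T1 + \sum_(1 <= j < p.+1) T j).
  rewrite /Bnk [RHS]mulrDr [in RHS]mulr_sumr; congr (_ + _).
    rewrite prodf_div /K /T1 /Q [\prod_(0 <= i < p.+1) _]big_ltn // -/Y1.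
    move: (nx1 n hn) (nx1 k hk) (nx1 0%N h0) nY1.
    move=> a b c d; field.
    by rewrite ?a ?b ?c ?d.
  rewrite !big_seq; apply: eq_bigr => j; rewrite mem_index_iota => hj.
  have -> : \prod_(1 <= i < p.+1 | i != j) ((x i - y j) / (y i - y j)) = Pj j / D j.
    rewrite -prodf_div; apply: eq_bigr => i _.
    by rewrite -[x i - y j]opprB -[y i - y j]opprB invrN mulrNN.
  rewrite /T (QE _ j hj) -/(Pj j) /K.
  have e1 : y j - 1 != 0 by rewrite subr_eq0 hy1.
  move: (nx1 n hn) (nx1 k hk) (nx1 0%N h0) (nD j hj) (ny1 j hj) e1 (nyx n j hn hj) (nyx k j hk hj).
  move=> a b c d e f g h; field.
  by rewrite ?a ?b ?c ?d ?e ?f ?g ?h.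
rewrite hB.
pose Ys := map y (index_iota 1 p.+1).
have yinj i j : (1 <= i <= p)%N -> (1 <= j <= p)%N -> (y i == y j) = (i == j).
  move=> hi hj; apply/eqP/eqP => [e|->//].
  have [//|/eqP ne] := eqVneq i j; by move: (hyy i j hi hj ne); rewrite e eqxx.
have hY c (G : R[i] -> R[i]) : (forall j, (1 <= j <= p)%N -> y j != c) ->
    \prod_(b <- Ys | b != c) G b = \prod_(1 <= i < p.+1) G (y i).
  move=> hc; rewrite big_map big_seq_cond [RHS]big_seq; apply: eq_bigl => i.
  rewrite mem_index_iota; case h: (1 <= i < p.+1)%N => //=; exact: hc.
have hYj j (G : R[i] -> R[i]) : (1 <= j <= p)%N ->
    \prod_(b <- Ys | b != y j) G b = \prod_(1 <= i < p.+1 | i != j) G (y i).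
  move=> hj; rewrite big_map big_seq_cond [RHS]big_seq_cond; apply: eq_bigl => i.
  rewrite mem_index_iota; case h: (1 <= i < p.+1)%N => //=; by rewrite yinj.
have nYs c : (forall j, (1 <= j <= p)%N -> y j != c) -> c \notin Ys.
  move=> hc; apply/mapP => -[j]; rewrite mem_index_iota => hj e.
  by move: (hc j hj); rewrite -e eqxx.
have uYs : uniq Ys.
  rewrite map_inj_in_uniq ?iota_uniq // => i j; rewrite !mem_index_iota => hi hj e.
  by apply/eqP; rewrite -yinj // e.
have sYs : size Ys = p by rewrite size_map size_iota subn1.
have [enk|nenk] := eqVneq n k.
  subst n; rewrite mul1r.
  pose Qk a := \prod_(0 <= i < p.+1 | i != k) (a - x i).
  have QQ a : Q a = (a - x k) * Qk a.
    by rewrite /Q (bigD1_seq k) ?iota_uniq ?mem_index_iota.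
  pose q := \prod_(0 <= i < p.+1 | i != k) ('X - (x i)%:P).
  have hq a : q.[a] = Qk a.
    by rewrite /q horner_prod; apply: eq_bigr => i _; rewrite hornerXsubC.
  have yx i : (i <= p)%N -> forall j, (1 <= j <= p)%N -> y j != x i.
    by move=> hi j hj; rewrite eq_sym hxy.
  have us : uniq [:: 1, x k & Ys].
    rewrite /= !inE uYs (negbTE (nYs 1 _)); last by move=> j hj; exact: hy1.
    by rewrite (nYs (x k) (yx k hk)) orbF eq_sym (hx1 k hk).
  have sq : (size q < size [:: 1%R, x k & Ys])%N.
    rewrite /q -big_filter size_prod_XsubC -rem_filter ?iota_uniq //.
    by rewrite size_rem ?mem_index_iota // size_iota /= sYs.
  have e1 : \prod_(b <- [:: 1, x k & Ys] | b != 1) (1 - b) = (1 - x k) * Y1.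
    rewrite !big_cons eqxx (hx1 k hk) hY // => j hj; exact: hy1.
  have ek : \prod_(b <- [:: 1, x k & Ys] | b != x k) (x k - b)
      = (x k - 1) * \prod_(1 <= i < p.+1) (x k - y i).
    rewrite !big_cons eqxx eq_sym (hx1 k hk) hY // => j hj; exact: yx.
  have ej j : (1 <= j <= p)%N -> \prod_(b <- [:: 1, x k & Ys] | b != y j) (y j - b)
      = (y j - 1) * (y j - x k) * D j.
    move=> hj; by rewrite !big_cons !(eq_sym _ (y j)) hy1 // (yx k hk j hj) hYj // !mulrA.
  have hs : \sum_(j <- Ys) q.[j] / \prod_(b <- [:: 1, x k & Ys] | b != j) (j - b)
      = \sum_(1 <= j < p.+1) T j.
    rewrite big_map; apply: eq_big_seq => i; rewrite mem_index_iota => hi.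
    rewrite hq ej // /T QQ.
    have := nD i hi; have : y i - x k != 0 by apply: nyx.
    have : y i - 1 != 0 by rewrite subr_eq0 hy1.
    move=> a b c; field; by rewrite ?a ?b ?c.
  have hT1 : T1 = Qk 1 / ((1 - x k) * Y1).
    rewrite /T1 QQ; have := nx1 k hk; move=> a; field; by rewrite ?a ?nY1.
  have := @res_sum _ _ q us sq.
  rewrite big_cons e1 big_cons ek hs !hq -hT1 addrA => /eqP.
  rewrite addrAC addr_eq0 => /eqP ->.
  have nk : x k - 1 != 0 by rewrite subr_eq0 hx1.
  have n0 : x 0%N - 1 != 0 by rewrite subr_eq0 hx1.
  have nP : \prod_(1 <= i < p.+1) (x k - y i) != 0.
    rewrite prodf_seq_neq0; apply/allP => i; rewrite mem_index_iota => hi.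
    exact: nxy.
  rewrite /K /Qk; move: (nx1 k hk) (nx1 0%N h0) => a b; field.
  by rewrite ?a ?b ?nk ?n0 ?nP.
rewrite mul0r.
pose q := \prod_(0 <= i < p.+1) ('X - (x i)%:P).
have hq a : q.[a] = Q a.
  by rewrite /q horner_prod; apply: eq_bigr => i _; rewrite hornerXsubC.
have Q0 i : (i <= p)%N -> Q (x i) = 0.
  move=> hi; apply/eqP; rewrite prodf_seq_eq0; apply/hasP; exists i.
    by rewrite mem_index_iota.
  by rewrite subrr eqxx.
have xnk : x n != x k by apply: hxx => //; exact/eqP.
have yx i : (i <= p)%N -> forall j, (1 <= j <= p)%N -> y j != x i.
  by move=> hi j hj; rewrite eq_sym hxy.
have us : uniq [:: 1, x n, x k & Ys].
  rewrite /= !inE uYs (negbTE (nYs 1 _)); last by move=> j hj; exact: hy1.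
  rewrite (negbTE (nYs (x n) (yx n hn))) (nYs (x k) (yx k hk)) (negbTE xnk).
  by rewrite ![1 == _]eq_sym (negbTE (hx1 n hn)) (negbTE (hx1 k hk)).
have sq : (size q < size [:: 1%R, x n, x k & Ys])%N.
  by rewrite size_prod_XsubC /= sYs size_iota.
have e1 : \prod_(b <- [:: 1, x n, x k & Ys] | b != 1) (1 - b) = (1 - x n) * (1 - x k) * Y1.
  rewrite !big_cons eqxx (hx1 n hn) (hx1 k hk) hY ?mulrA // => j hj; exact: hy1.
have ej j : (1 <= j <= p)%N -> \prod_(b <- [:: 1, x n, x k & Ys] | b != y j) (y j - b)
    = (y j - 1) * (y j - x n) * (y j - x k) * D j.
  move=> hj; by rewrite !big_cons !(eq_sym _ (y j)) hy1 // (yx n hn j hj) (yx k hk j hj) hYj // !mulrA.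
have hs : \sum_(j <- Ys) q.[j] / \prod_(b <- [:: 1, x n, x k & Ys] | b != j) (j - b)
    = \sum_(1 <= j < p.+1) T j.
  rewrite big_map; apply: eq_big_seq => i; rewrite mem_index_iota => hi.
  by rewrite hq ej.
have := @res_sum _ _ q us sq.
rewrite big_cons e1 big_cons [\sum_(j <- x k :: Ys) _]big_cons hs (hq 1) (hq (x n)) (hq (x k)) !Q0 // !mul0r !add0r -/T1 => ->.
by rewrite mulr0.
Qed.
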